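(* Let $d\ge 1$, $\kappa>0$, and let $\bm{x}_1,\dots,\bm{x}_{l+m}\in\mathcal{H}_d$, where the first $l$ points are designated as landmarks and the remaining $m$ as non-landmarks. Assume the landmarks $\bm{x}_1,\dots,\bm{x}_l$ are not all contained in a single hyperplane of $\mathcal{H}_d$ (i.e., they are not all contained in a $d$-dimensional linear subspace of $\mathbb{R}^{d+1}$; in particular $l\ge d+1$). Let $D=[d_{ij}]$ with $d_{ij}=\mathrm{d}^\kappa_H(\bm{x}_i,\bm{x}_j)$, partitioned as $D=\begin{psmallmatrix} D_L & D_N^\top\\ D_N & D_R\end{psmallmatrix}$ with $D_L\in\mathbb{R}^{l\times l}$ (landmark–landmark distances) and $D_N\in\mathbb{R}^{m\times l}$ (non-landmark–landmark distances). Then the algorithm L-hydra$(D_L,D_N,d,\kappa)$ does not return Null, and the rows $\hat{\bm{x}}_1,\dots,\hat{\bm{x}}_{l+m}$ of the returned matrix $\hat X=\begin{psmallmatrix}\hat X_L\\ \hat X_N\end{psmallmatrix}$ are points of $\mathcal{H}_d$ satisfying $$\mathrm{d}^\kappa_H(\hat{\bm{x}}_i,\hat{\bm{x}}_j)=\mathrm{d}^\kappa_H(\bm{x}_i,\bm{x}_j)\quad\text{for all } i,j=1,\dots,l+m.$$ In fact there is a positive Lorentz matrix $T$ with $\hat X = XT$, where $X$ is the matrix with rows $\bm{x}_1^\top,\dots,\bm{x}_{l+m}^\top$.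
   Context: Lorentz product on $\mathbb{R}^{d+1}$: $\bm{x}\circ\bm{y} = x_1y_1 - (x_2y_2+\dots+x_{d+1}y_{d+1})$. $J=\operatorname{diag}(1,-1,\dots,-1)\in\mathbb{R}^{(d+1)\times(d+1)}$. Hyperboloid: $\mathcal{H}_d=\{\bm{x}\in\mathbb{R}^{d+1}: \bm{x}\circ\bm{x}=1,\ x_1>0\}$. For $\kappa>0$: $\mathrm{d}^\kappa_H(\bm{x},\bm{y})=\frac{1}{\sqrt{\kappa}}\operatorname{arcosh}(\bm{x}\circ\bm{y})$. A positive Lorentz matrix is an invertible $T$ with $T_{11}>0$ and $T^\top JT=TJT^\top=J$. Algorithm L-hydra$(D_L,D_N,d,\kappa)$: input a symmetric $D_L\in\mathbb{R}_{\ge0}^{l\times l}$ with zero diagonal, $D_N\in\mathbb{R}_{\ge 0}^{m\times l}$, an integer $d\ge1$ and $\kappa>0$. Step 1: set $A_L=\cosh(\sqrt{\kappa}D_L)$, $A_N=\cosh(\sqrt{\kappa}D_N)$ (cosh applied entrywise) and take an eigendecomposition $A_L=Q\Lambda Q^\top$ with $Q$ orthogonal, columns $\bm{q}_1,\dots,\bm{q}_l$, and $\Lambda=\operatorname{diag}(\lambda_1,\dots,\lambda_l)$, $\lambda_1\ge\dots\ge\lambda_l$; the sign of $\bm{q}_1$ is chosen so that its entries are positive (Perron vector). Step 2: if $\lambda_{l-d+1},\dots,\lambda_l$ are not all strictly negative (or $l<d+1$), return Null; otherwise set $\hat X_L=\big[\sqrt{\lambda_1}\bm{q}_1,\ \sqrt{-\lambda_{l-d+1}}\bm{q}_{l-d+1},\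 \dots,\ \sqrt{-\lambda_l}\bm{q}_l\big]\in\mathbb{R}^{l\times(d+1)}$. Step 3: set $\hat X_N=A_N\big[\bm{q}_1/\sqrt{\lambda_1},\ -\bm{q}_{l-d+1}/\sqrt{-\lambda_{l-d+1}},\ \dots,\ -\bm{q}_l/\sqrt{-\lambda_l}\big]\in\mathbb{R}^{m\times(d+1)}$. Return $\hat X=\begin{psmallmatrix}\hat X_L\\ \hat X_N\end{psmallmatrix}$. *)

(* Defs.v *)
From HB Require Import structures.
From mathcomp Require Import all_boot all_order all_algebra.
From mathcomp Require Import reals.
From mathcomp.analysis Require Import sequences exp.
Set Implicit Arguments. Unset Strict Implicit. Unset Printing Implicit Defensive.
Import Order.TTheory GRing.Theory Num.Theory.
Local Open Scope ring_scope.

Section LHydra.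
Variable R : realType.

Definition cosh (t : R) : R := (expR t + expR (- t)) / 2.
Definition arcosh (y : R) : R := ln (y + Num.sqrt (y ^+ 2 - 1)).

(* Lorentz product x o y = x_1 y_1 - (x_2 y_2 + ... + x_{d+1} y_{d+1}),
   with coordinates indexed 0..d (coordinate 1 of the paper is index 0). *)
Definition lorentz (n : nat) (x y : 'rV[R]_n.+1) : R :=
  x 0 0 * y 0 0 - \sum_(i < n.+1 | i != 0) x 0 i * y 0 i.

Definition Jmx (n : nat) : 'M[R]_n.+1 :=
  diag_mx (\row_(i < n.+1) (if i == 0 then 1 else -1)).

Definition in_hyperboloid (n : nat) (x : 'rV[R]_n.+1) : Prop :=
  lorentz x x = 1 /\ 0 < x 0 0.

Definition dH (kappa : R) (n : nat) (x y : 'rV[R]_n.+1) : R :=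
  (Num.sqrt kappa)^-1 * arcosh (lorentz x y).

Definition positive_lorentz (n : nat) (T : 'M[R]_n.+1) : Prop :=
  T \in unitmx /\ 0 < T 0 0 /\
  T^T *m Jmx n *m T = Jmx n /\ T *m Jmx n *m T^T = Jmx n.

Definition dist_matrix (kappa : R) (N n : nat) (X : 'M[R]_(N, n.+1)) : 'M[R]_N :=
  \matrix_(i, j) dH kappa (row i X) (row j X).

Definition cosh_mx (kappa : R) (p q : nat) (M : 'M[R]_(p, q)) : 'M[R]_(p, q) :=
  map_mx (fun t => cosh (Num.sqrt kappa * t)) M.

(* Step 1: (Q, lam) is an admissible eigendecomposition A_L = Q diag(lam) Q^T
   with Q orthogonal, eigenvalues in non-increasing order, and the first
   column q_1 (Perron vector) with positive entries. *)
Definition Lhydra_eig (kappa : R) (l : nat) (DL : 'M[R]_l)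
    (Q : 'M[R]_l) (lam : 'rV[R]_l) : Prop :=
  Q *m Q^T = 1%:M /\
  cosh_mx kappa DL = Q *m diag_mx lam *m Q^T /\
  (forall i j : 'I_l, (i <= j)%N -> lam 0 j <= lam 0 i) /\
  (forall i j : 'I_l, val j = 0%N -> 0 < Q i j).

(* 0-based index (into 1..l columns) of the k-th selected column:
   k = 0 -> q_1 ; k = 1..d -> q_{l-d+k} (0-based l-d-1+k) *)
Definition sel_idx (l d : nat) (k : 'I_d.+1) : nat :=
  if val k == 0%N then 0%N else (l - d.+1 + k)%N.

(* selection matrix: (Q *m sel_mx) has columns q_1, q_{l-d+1}, ..., q_l *)
Definition sel_mx (l d : nat) : 'M[R]_(l, d.+1) :=
  \matrix_(j, k) (if val j == @sel_idx l d k then 1 else 0).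

Definition sgn_col (d : nat) (k : 'I_d.+1) : R := if val k == 0%N then 1 else -1.

(* Algorithm L-hydra, run with a given admissible eigendecomposition (Q, lam). *)
Definition Lhydra (l m : nat) (DL : 'M[R]_l) (DN : 'M[R]_(m, l)) (d : nat)
    (kappa : R) (Q : 'M[R]_l) (lam : 'rV[R]_l) : option 'M[R]_(l + m, d.+1) :=
  let QS := Q *m sel_mx l d in
  let mu := lam *m sel_mx l d in
  if (l < d.+1)%N then None
  else if ~~ [forall k : 'I_d.+1, (val k != 0%N) ==> (mu 0 k < 0)] then None
  else
    let XL := \matrix_(i < l, k < d.+1) (QS i k * Num.sqrt (sgn_col k * mu 0 k)) in
    let XN := cosh_mx kappa DN *m
                \matrix_(j < l, k < d.+1) (sgn_col k * QS j k / Num.sqrt (sgn_col k * mu 0 k)) in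
    Some (col_mx XL XN).

End LHydra.

(* Main.v *)
Require Import Defs.
From HB Require Import structures.
From mathcomp Require Import all_boot all_order all_algebra.
From mathcomp Require Import reals.
From mathcomp.analysis Require Import sequences exp.
From mathcomp Require Import ring lra zify.
Import Order.TTheory GRing.Theory Num.Theory.
Local Open Scope ring_scope.
Set Implicit Arguments. Unset Strict Implicit. Unset Printing Implicit Defensive.

Section Aux.
Variable R : realType.

Lemma lorentzE n (x y : 'rV[R]_n.+1) : lorentz x y = (x *m Jmx R n *m y^T) 0 0.
Proof.
rewrite /lorentz /Jmx mul_mx_diag [RHS]mxE [RHS](bigD1 ord0) //=.
rewrite !mxE eqxx mulr1 -sumrN; congr (_ + _).
apply: eq_big => [i|i /negbTE Hi] //.
by rewrite !mxE Hi mulrN1 mulNr.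
Qed.

Definition sq0 n (x y : 'rV[R]_n.+1) := \sum_(i < n.+1 | i != 0) x 0 i * y 0 i.

Lemma quad_ge0 n (x y : 'rV[R]_n.+1) :
  0 <= y 0 0 ^+ 2 * sq0 x x - 2 * x 0 0 * y 0 0 * sq0 x y + x 0 0 ^+ 2 * sq0 y y.
Proof.
have -> : y 0 0 ^+ 2 * sq0 x x - 2 * x 0 0 * y 0 0 * sq0 x y + x 0 0 ^+ 2 * sq0 y y
   = \sum_(i < n.+1 | i != 0) (x 0 i * y 0 0 - y 0 i * x 0 0) ^+ 2.
  rewrite /sq0 !mulr_sumr -sumrB -big_split /=; apply: eq_bigr => i _; ring.
by apply: sumr_ge0 => i _; rewrite sqr_ge0.
Qed.

Lemma sq0_ge0 n (x : 'rV[R]_n.+1) : 0 <= sq0 x x.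
Proof. by apply: sumr_ge0 => i _; rewrite -expr2 sqr_ge0. Qed.

Lemma lorentz_sq0 n (x y : 'rV[R]_n.+1) : lorentz x y = x 0 0 * y 0 0 - sq0 x y.
Proof. by []. Qed.

Lemma hyp_ge1 n (x y : 'rV[R]_n.+1) :
  in_hyperboloid x -> in_hyperboloid y -> 1 <= lorentz x y.
Proof.
rewrite /in_hyperboloid !lorentz_sq0 => -[hx px] [hy py].
have K := quad_ge0 x y.
have ha := sq0_ge0 x; have hb := sq0_ge0 y.
move: K ha hb hx hy px py.
set a := sq0 x x; set b := sq0 y y; set s := sq0 x y; set x0 := x 0 0; set y0 := y 0 0.
move=> K ha hb hx hy px py.
have hp : 0 < x0 * y0 by rewrite mulr_gt0.
have h1 : 2 * (x0 * y0) <= 2 + a + b.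
  have e : (2 + a + b) ^+ 2 - (2 * (x0 * y0)) ^+ 2 = (a - b) ^+ 2.
    have ex : x0 ^+ 2 = 1 + a by lra.
    have ey : y0 ^+ 2 = 1 + b by lra.
    rewrite exprMn exprMn ex ey; ring.
  have e' : (2+a+b - 2*(x0*y0)) * (2+a+b+2*(x0*y0)) = (a-b)^+2 by rewrite -e; ring.
  have : 0 <= (2+a+b - 2*(x0*y0)) * (2+a+b+2*(x0*y0)) by rewrite e' sqr_ge0.
  rewrite pmulr_lge0; lra.
have ex : x0 ^+ 2 = 1 + a by lra.
have ey : y0 ^+ 2 = 1 + b by lra.
have h2 : 2 * (x0 * y0) * (x0 * y0 - s - 1) >= 0.
  have -> : 2 * (x0 * y0) * (x0 * y0 - s - 1) = 2 * (x0^+2 * y0^+2) - 2 * x0 * y0 * s - 2 * (x0 * y0) by ring.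
  rewrite ex ey; move: K; rewrite ex ey; nra.
move: h2; rewrite pmulr_rge0; lra.
Qed.

Lemma timelike_orth n (u v : 'rV[R]_n.+1) :
  0 < lorentz u u -> 0 < lorentz v v -> lorentz u v != 0.
Proof.
rewrite !lorentz_sq0 => hu hv; apply/negP => /eqP huv.
have K := quad_ge0 u v.
have ha := sq0_ge0 u; have hb := sq0_ge0 v.
move: K ha hb hu hv huv.
set a := sq0 u u; set b := sq0 v v; set s := sq0 u v; set x0 := u 0 0; set y0 := v 0 0.
move=> K ha hb hu hv huv.
have hs : s = x0 * y0 by lra.
rewrite hs in K.
nra.
Qed.

Lemma cosh_arcosh (t : R) : 1 <= t -> cosh (arcosh t) = t.
Proof.
move=> t1; rewrite /cosh /arcosh.
set s := Num.sqrt _.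
have hs2 : s ^+ 2 = t ^+ 2 - 1 by rewrite sqr_sqrtr // subr_ge0; nra.
have s0 : 0 <= s by rewrite sqrtr_ge0.
have up : 0 < t + s by lra.
rewrite expRN lnK ?posrE //.
have Hu : (t + s) * (t - s) = 1 by nra.
have -> : (t + s)^-1 = t - s.
  by rewrite -[(t + s)^-1]mulr1 -Hu mulKf // gt_eqF.
lra.
Qed.

Lemma dH_cosh kappa n (x y : 'rV[R]_n.+1) : 0 < kappa -> 1 <= lorentz x y ->
  cosh (Num.sqrt kappa * dH kappa x y) = lorentz x y.
Proof.
move=> k0 h; rewrite /dH mulrA mulfV ?mul1r ?cosh_arcosh //.
by rewrite gt_eqF // sqrtr_gt0.
Qed.

Lemma mx3E p r n (A : 'M[R]_(p, n)) (B : 'M[R]_n) (C : 'M[R]_(r, n)) i j :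
  (A *m B *m C^T) i j = (row i A *m B *m (row j C)^T) 0 0.
Proof.
by rewrite !mxE; apply: eq_bigr => k _; rewrite !mxE; congr (_ * _);
  apply: eq_bigr => k' _; rewrite !mxE.
Qed.


Lemma Jtr n : (Jmx R n)^T = Jmx R n.
Proof. exact: tr_diag_mx. Qed.

Lemma JJ n : Jmx R n *m Jmx R n = 1%:M.
Proof.
rewrite /Jmx mulmx_diag; apply/matrixP => i j; rewrite !mxE.
by case: (i == 0); rewrite ?mulr1 ?mulrNN ?mulr1.
Qed.

Lemma lorentz_mul n (T : 'M[R]_n.+1) (x z : 'rV[R]_n.+1) :
  T *m Jmx R n *m T^T = Jmx R n -> lorentz (x *m T) (z *m T) = lorentz x z.
Proof.
move=> H; rewrite !lorentzE trmx_mul !mulmxA.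
by rewrite -(mulmxA x T) -(mulmxA x (T *m _)) H.
Qed.

Lemma lorentzN n (x z : 'rV[R]_n.+1) : lorentz x (- z) = - lorentz x z.
Proof.
rewrite !lorentzE; have -> : (- z)^T = - z^T by apply/matrixP => i j; rewrite !mxE.
by rewrite mulmxN [LHS]mxE.
Qed.

Definition ycol n (T : 'M[R]_n.+1) : 'rV[R]_n.+1 := (col 0 T)^T *m Jmx R n.

Lemma lorentz_col n (T : 'M[R]_n.+1) (x : 'rV[R]_n.+1) :
  (x *m T) 0 0 = lorentz x (ycol T).
Proof.
rewrite lorentzE /ycol trmx_mul trmxK Jtr mulmxA -(mulmxA x _ (Jmx R n)) JJ mulmx1.
by rewrite !mxE; apply: eq_bigr => k _; rewrite !mxE.
Qed.

Lemma ycol00 n (T : 'M[R]_n.+1) : ycol T 0 0 = T 0 0.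
Proof. by rewrite /ycol /Jmx mul_mx_diag !mxE eqxx mulr1. Qed.

Lemma lorentz_ycol n (T : 'M[R]_n.+1) :
  T^T *m Jmx R n *m T = Jmx R n -> lorentz (ycol T) (ycol T) = 1.
Proof.
move=> H; rewrite lorentzE /ycol trmx_mul trmxK Jtr.
rewrite !mulmxA -(mulmxA _ (Jmx R n) (Jmx R n)) JJ mulmx1.
rewrite -[col 0 T]trmxK tr_col.
rewrite trmxK; have := mx3E (T^T) (Jmx R n) (T^T) 0 0; rewrite trmxK H => <-.
by rewrite /Jmx !mxE.
Qed.

Lemma lorentzC n (x z : 'rV[R]_n.+1) : lorentz x z = lorentz z x.
Proof.
rewrite /lorentz mulrC; congr (_ - _); apply: eq_bigr => i _; exact: mulrC.
Qed.

Lemma lorentzNN n (x : 'rV[R]_n.+1) : lorentz (- x) (- x) = lorentz x x.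
Proof. by rewrite lorentzN lorentzC lorentzN opprK. Qed.

Lemma sel_lt l d (H : (d.+1 <= l)%N) (k : 'I_d.+1) : (sel_idx l k < l)%N.
Proof.
rewrite /sel_idx; case: eqP => _; first by apply: leq_trans H.
have := ltn_ord k; lia.
Qed.

Definition sel_ord l d (H : (d.+1 <= l)%N) (k : 'I_d.+1) : 'I_l := Ordinal (sel_lt H k).

Lemma sel_mxE p l d (H : (d.+1 <= l)%N) (A : 'M[R]_(p, l)) i k :
  (A *m sel_mx R l d) i k = A i (sel_ord H k).
Proof.
rewrite mxE (bigD1 (sel_ord H k)) //= big1 ?addr0.
  by rewrite mxE eqxx mulr1.
move=> j hj; rewrite mxE ifF ?mulr0 //; apply: contraNF hj => /eqP e.
by apply/eqP/val_inj.
Qed.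

Lemma sel_inj l d (H : (d.+1 <= l)%N) : injective (sel_ord H).
Proof.
move=> k k' /(congr1 val) /=; rewrite /sel_idx.
case: eqP => hk; case: eqP => hk' e; apply/val_inj => /=; rewrite ?hk ?hk'; lia.
Qed.

End Aux.


Lemma card_suffix l j : #|[set i : 'I_l | (j <= i)%N]| = (l - j)%N.
Proof.
rewrite -sum1_card (eq_bigl (fun i : 'I_l => (j <= i)%N)) => [|i]; last by rewrite inE.
rewrite -(big_mkord (fun i => (j <= i)%N) (fun=> 1%N)).
case: (leqP j l) => hj.
  rewrite (big_cat_nat (n:=j)) // /= big_nat_cond big1 ?add0n; last first.
    by move=> i /andP[/andP[_ hi] hji]; move: (leq_trans hi hji); rewrite ltnn.
  rewrite big_mkcond (eq_big_nat _ _ (F2 := fun=> 1%N)) ?sum_nat_const_nat ?muln1 //.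
  by move=> i /andP[-> _].
rewrite big_nat_cond big1; first by apply/esym/eqP; rewrite subn_eq0 ltnW.
by move=> i /andP[/andP[_ hi] hji]; move: (leq_trans hji (ltnW hi)); rewrite leqNgt hj.
Qed.

Lemma rank_diag (F : fieldType) n (v : 'rV[F]_n) :
  \rank (diag_mx v) = #|[set i | v 0 i != 0]|.
Proof.
set S := [set i | v 0 i != 0].
pose f (j : 'I_#|S|) : 'I_n := enum_val j.
have finj : injective f by exact: enum_val_inj.
pose E : 'M[F]_(#|S|, n) := \matrix_(j, i) (i == f j)%:R.
pose w := \row_j v 0 (f j).
have h1 : E *m diag_mx v *m E^T = diag_mx w.
  apply/matrixP => a b; rewrite mul_mx_diag !mxE (bigD1 (f a)) //= big1.
    rewrite !mxE eqxx (inj_eq finj) mul1r addr0 mulr_natr; by case: (a == b); rewrite ?mulr1n ?mulr0n.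
  by move=> i /negbTE hi; rewrite !mxE hi mul0r mul0r.
have h2 : E^T *m diag_mx w *m E = diag_mx v.
  apply/matrixP => i i'; rewrite mul_mx_diag !mxE.
  case: (boolP (i \in S)) => iS.
    have fi : f (enum_rank_in iS i) = i by rewrite /f enum_rankK_in.
    rewrite (bigD1 (enum_rank_in iS i)) //= big1.
      rewrite !mxE fi eqxx mul1r addr0 [i' == i]eq_sym; by case: (i == i'); rewrite ?mulr1n ?mulr0n ?mulr1 ?mulr0.
    move=> j hj; rewrite !mxE; case: eqP => [ej|]; last by rewrite mul0r mul0r.
    have : f j = f (enum_rank_in iS i) by rewrite fi ej.
    by move/finj => ejj; move: hj; rewrite ejj eqxx.
  have -> : v 0 i = 0 by move: iS; rewrite inE negbK => /eqP.
  rewrite mul0rn big1 // => j _; rewrite !mxE; case: eqP => [ej|]; last by rewrite mul0r mul0r.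
  by move: iS; rewrite ej /f enum_valP.
have wu : diag_mx w \in unitmx.
  rewrite unitmxE det_diag unitfE; apply/prodf_neq0 => j _.
  by rewrite mxE; move: (enum_valP j); rewrite inE.
apply/eqP; rewrite eqn_leq; apply/andP; split.
  rewrite -h2; apply: leq_trans (mxrankM_maxl _ _) _; apply: leq_trans (mxrankM_maxr _ _) _.
  exact: rank_leq_col.
rewrite -{1}(mxrank_unit wu) -h1; apply: leq_trans (mxrankM_maxl _ _) _.
exact: mxrankM_maxr.
Qed.

Unset Implicit Arguments.

Theorem theorem1 (R : realType) (d l m : nat) (kappa : R)
    (X : 'M[R]_(l + m, d.+1)) :
  (1 <= d)%N -> 0 < kappa ->
  (forall i, in_hyperboloid (row i X)) ->
  row_full (usubmx X) ->
  forall (Q : 'M[R]_l) (lam : 'rV[R]_l),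
    Lhydra_eig kappa (ulsubmx (dist_matrix kappa X)) Q lam ->
    exists Xh : 'M[R]_(l + m, d.+1),
      Lhydra (ulsubmx (dist_matrix kappa X)) (dlsubmx (dist_matrix kappa X))
             d kappa Q lam = Some Xh /\
      (forall i, in_hyperboloid (row i Xh)) /\
      (forall i j, dH kappa (row i Xh) (row j Xh) = dH kappa (row i X) (row j X)) /\
      (exists T : 'M[R]_d.+1, positive_lorentz T /\ Xh = X *m T).
Proof.
move=> hd k0 hX hfull Q lam [hQ [hA [hsort hpos]]].
set D := dist_matrix kappa X.
set XL := usubmx X; set XN := dsubmx X; set J := Jmx R d.
have hXL : forall i, in_hyperboloid (row i XL) by move=> i; rewrite /XL row_usubmx.
have hXN : forall i, in_hyperboloid (row i XN) by move=> i; rewrite /XN row_dsubmx.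
have hAL : cosh_mx kappa (ulsubmx D) = XL *m J *m XL^T.
  apply/matrixP => i j; rewrite mx3E -lorentzE.
  have e : ulsubmx D i j = dH kappa (row i XL) (row j XL).
    by rewrite /XL !row_usubmx /D !mxE.
  by rewrite [LHS]mxE e dH_cosh // hyp_ge1.
have hAN : cosh_mx kappa (dlsubmx D) = XN *m J *m XL^T.
  apply/matrixP => i j; rewrite mx3E -lorentzE.
  have e : dlsubmx D i j = dH kappa (row i XN) (row j XL).
    by rewrite /XL /XN row_usubmx row_dsubmx /D !mxE.
  by rewrite [LHS]mxE e dH_cosh // hyp_ge1.
have hl : (d.+1 <= l)%N by move: hfull; rewrite /row_full => /eqP <-; exact: rank_leq_row.
have l0 : (0 < l)%N by apply: leq_trans hl.
pose i0 : 'I_l := Ordinal l0.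
have QtQ : Q^T *m Q = 1%:M by exact: mulmx1C.
have Qu : Q \in unitmx by case: (mulmx1_unit hQ).
set M := Q^T *m XL.
have hD : diag_mx lam = M *m J *m M^T.
  have : Q^T *m (Q *m diag_mx lam *m Q^T) *m Q = diag_mx lam.
    by rewrite !mulmxA QtQ mul1mx -mulmxA QtQ mulmx1.
  by rewrite -hA hAL /M trmx_mul trmxK !mulmxA => <-.
have rM : \rank M = d.+1.
  rewrite -mxrank_tr /M trmx_mul trmxK mxrankMfree ?row_free_unit // mxrank_tr.
  exact/eqP.
have Ju : row_free J by rewrite row_free_unit; case: (mulmx1_unit (JJ R d)).
have rD : \rank (diag_mx lam) = d.+1.
  rewrite hD mxrankMfree; last by rewrite /row_free mxrank_tr rM.
  by rewrite mxrankMfree.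
set S := [set i | lam 0 i != 0].
have cS : #|S| = d.+1 by rewrite -rank_diag.
have lamE : forall i j, diag_mx lam i j = lorentz (row i M) (row j M).
  by move=> i j; rewrite lorentzE -mx3E hD.
have lamii : forall i, lam 0 i = lorentz (row i M) (row i M).
  by move=> i; rewrite -lamE mxE eqxx mulr1n.
have lamij : forall i j, i != j -> lorentz (row i M) (row j M) = 0.
  by move=> i j /negbTE h; rewrite -lamE mxE h mulr0n.
have lam0 : 0 < lam 0 i0.
  have h1 : \sum_k Q i0 k * lam 0 k * Q i0 k = 1.
    have : cosh_mx kappa (ulsubmx D) i0 i0 = 1.
      by rewrite hAL mx3E -lorentzE; case: (hXL i0).
    rewrite hA mul_mx_diag mxE => <-; apply: eq_bigr => k _; by rewrite !mxE.
  rewrite ltNge; apply/negP => hneg.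
  have : \sum_k Q i0 k * lam 0 k * Q i0 k <= 0.
    apply: sumr_le0 => k _.
    have : lam 0 k <= 0 by apply: le_trans (hsort i0 k _) hneg.
    nra.
  lra.
have Puniq : forall i, 0 < lam 0 i -> i = i0.
  move=> i hi; apply/eqP; apply: contraT => hne.
  have := @timelike_orth _ _ (row i M) (row i0 M).
  by rewrite -!lamii => /(_ hi lam0); rewrite lamij ?eqxx.
set N := [set i | lam 0 i < 0].
have cN : (d <= #|N|)%N.
  have : S \subset i0 |: N.
    apply/subsetP => i; rewrite !inE => hi.
    case: (ltgtP (lam 0 i) 0) => h; first by rewrite orbT.
      by rewrite (Puniq _ h) eqxx.
    by rewrite h eqxx in hi.
  move/subset_leq_card; rewrite cardsU1 cS => h.
  have := leq_trans h (leq_add (leq_b1 _) (leqnn _)); lia.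
have negsuf : forall j : 'I_l, (l - d <= j)%N -> lam 0 j < 0.
  move=> j hj; rewrite ltNge; apply/negP => hj0.
  have : N \subset [set i : 'I_l | (j.+1 <= i)%N].
    apply/subsetP => i; rewrite !inE => hi; rewrite ltnNge; apply/negP => hij.
    have := hsort _ _ hij; lra.
  move/subset_leq_card; rewrite card_suffix => h.
  have := leq_trans cN h; have := ltn_ord j; lia.
have midzero : forall i : 'I_l, i != i0 -> (i < l - d)%N -> lam 0 i = 0.
  move=> i hi hil; case: (ltgtP (lam 0 i) 0) => // h.
    have h1 : [set j : 'I_l | (i <= j)%N] \subset N.
      by apply/subsetP => j; rewrite !inE => hij; exact: le_lt_trans (hsort _ _ hij) h.
    have h2 : i0 |: N \subset S.
      apply/subsetP => j; rewrite !inE => /orP[/eqP -> | hj].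
        by rewrite gt_eqF.
      by rewrite lt_eqF.
    have i0N : i0 \notin N by rewrite inE -leNgt ltW.
    move: (subset_leq_card h1) (subset_leq_card h2); rewrite card_suffix cardsU1 i0N cS.
    lia.
  by move: hi; rewrite (Puniq _ h) eqxx.
set mu := lam *m sel_mx R l d.
have muE : forall k, mu 0 k = lam 0 (sel_ord hl k) by move=> k; rewrite /mu sel_mxE.
have sel0 : sel_ord hl 0 = i0 by apply/val_inj.
have mu_neg : forall k : 'I_d.+1, val k != 0%N -> mu 0 k < 0.
  move=> k hk; rewrite muE; apply: negsuf => /=; rewrite /sel_idx (negbTE hk).
  have k1 : (0 < k)%N by rewrite lt0n. lia.
have sgnmu : forall k, 0 < sgn_col R k * mu 0 k.
  move=> k; rewrite /sgn_col; case: eqP => hk.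
    by rewrite mul1r muE (_ : k = 0) ?sel0 //; apply/val_inj.
  by rewrite mulN1r oppr_gt0 mu_neg //; apply/eqP.
have hcond : [forall k : 'I_d.+1, (val k != 0%N) ==> (mu 0 k < 0)].
  by apply/forallP => k; apply/implyP; exact: mu_neg.
set QS := Q *m sel_mx R l d.
pose s := \row_k Num.sqrt (sgn_col R k * mu 0 k).
pose XhL := \matrix_(i < l, k < d.+1) (QS i k * Num.sqrt (sgn_col R k * mu 0 k)).
pose Qp := \matrix_(j < l, k < d.+1) (sgn_col R k * QS j k / Num.sqrt (sgn_col R k * mu 0 k)).
pose XhN := cosh_mx kappa (dlsubmx D) *m Qp.
have hL : Lhydra (ulsubmx D) (dlsubmx D) d kappa Q lam = Some (col_mx XhL XhN).
  by rewrite /Lhydra ltnNge hl /= -/mu hcond /=.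
have s_gt0 : forall k, 0 < s 0 k by move=> k; rewrite mxE sqrtr_gt0.
have sE : forall k, s 0 k ^+ 2 = sgn_col R k * mu 0 k.
  by move=> k; rewrite mxE sqr_sqrtr // ltW.
have sgn2 : forall k : 'I_d.+1, sgn_col R k * sgn_col R k = 1.
  by move=> k; rewrite /sgn_col; case: (val k == 0%N); rewrite ?mulr1 ?mulrNN ?mulr1.
have XhLE : XhL = QS *m diag_mx s.
  by rewrite mul_mx_diag; apply/matrixP => i k; rewrite !mxE.
have QpE : Qp = QS *m diag_mx (\row_k (sgn_col R k / s 0 k)).
  by rewrite mul_mx_diag; apply/matrixP => i k; rewrite !mxE [RHS]mulrCA mulrA.
have selD : diag_mx lam *m sel_mx R l d = sel_mx R l d *m diag_mx mu.
  apply/matrixP => j k; rewrite mul_diag_mx mul_mx_diag [LHS]mxE [RHS]mxE muE !mxE.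
  case: (boolP (val j == sel_idx l k)) => e; last by rewrite mulr0 mul0r.
  by rewrite mulr1 mul1r; congr (lam 0 _); apply/val_inj; apply/eqP.
have selsurj : forall i, lam 0 i != 0 -> exists k, sel_ord hl k = i.
  move=> i hi; case: (eqVneq i i0) => [->|hne]; first by exists 0.
  have hil : (l - d <= i)%N.
    by rewrite leqNgt; apply/negP => h; move: hi; rewrite midzero // eqxx.
  have hk : (i - (l - d.+1) < d.+1)%N by have := ltn_ord i; lia.
  exists (Ordinal hk); apply/val_inj => /=; rewrite /sel_idx /=.
  case: eqP => h; lia.
have selsel : diag_mx lam *m (sel_mx R l d *m (sel_mx R l d)^T) = diag_mx lam.
  apply/matrixP => i j; rewrite mul_diag_mx !mxE.
  case: (eqVneq (lam 0 i) 0) => hz; first by rewrite hz !mul0r mul0rn.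
  have [k0' hk] := selsurj _ hz.
  rewrite (bigD1 k0') //= big1.
    have hv : val i = sel_idx l k0' by rewrite -hk.
    rewrite !mxE addr0 hv eqxx mul1r -hv val_eqE.
    by case: (eqVneq i j) => [e|hij]; rewrite ?mulr1 ?mulr1n ?mulr0 ?mulr0n.
  move=> k hk'; rewrite !mxE ifF ?mul0r //; apply/negbTE; apply: contra hk' => /eqP e.
  by apply/eqP; apply: (@sel_inj _ _ hl); apply/val_inj; rewrite /= -e -hk.
have XhNE0 : XhN = cosh_mx kappa (dlsubmx D) *m Qp by [].
clearbody XhN XhL Qp s mu.
have muR : mu = \row_k (sgn_col R k * s 0 k ^+ 2).
  by apply/rowP => k; rewrite [RHS]mxE sE mulrA sgn2 mul1r.
have sgnJ : forall k : 'I_d.+1, (if k == 0 then 1 else -1 : R) = sgn_col R k by [].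
have J2 : diag_mx s *m J *m diag_mx s = diag_mx mu.
  rewrite muR /J /Jmx !mulmx_diag; congr diag_mx; apply/rowP => k; rewrite !mxE sgnJ; ring.
have J2' : forall p (Z : 'M[R]_(d.+1, p)), diag_mx s *m (J *m (diag_mx s *m Z)) = diag_mx mu *m Z.
  by move=> p Z; rewrite !mulmxA J2.
have key : forall k, sgn_col R k * s 0 k ^+ 2 * (sgn_col R k / s 0 k) = s 0 k.
  move=> k; have := sgn2 k; have := s_gt0 k; move: (s 0 k) (sgn_col R k) => a b ha hb.
  have -> : b * a ^+ 2 * (b / a) = (b * b) * (a * a / a) by rewrite expr2; ring.
  by rewrite hb mul1r mulfK // gt_eqF.
have D2 : diag_mx mu *m diag_mx (\row_k (sgn_col R k / s 0 k)) = diag_mx s.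
  rewrite muR mulmx_diag; congr diag_mx; apply/rowP => k; rewrite !mxE; exact: key.
have XhLJ : XhL *m J *m XhL^T = XL *m J *m XL^T.
  rewrite XhLE /QS !trmx_mul tr_diag_mx -hAL hA -!mulmxA J2' (mulmxA (sel_mx R l d)) -selD.
  by rewrite -(mulmxA (diag_mx lam)) (mulmxA (sel_mx R l d)) (mulmxA (diag_mx lam)) selsel !mulmxA.
have ALQp : XL *m (J *m XL^T *m Qp) = XhL.
  rewrite !mulmxA -hAL hA QpE XhLE /QS -!mulmxA (mulmxA Q^T) QtQ mul1mx.
  by rewrite (mulmxA (diag_mx lam)) selD -mulmxA D2 mulmxA.
set T := J *m XL^T *m Qp.
have XhNE : XhN = XN *m T by rewrite XhNE0 hAN /T !mulmxA.
have XhE : col_mx XhL XhN = X *m T by rewrite XhNE -ALQp -mul_col_mx /XL /XN vsubmxK.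
have TJT : T *m J *m T^T = J.
  have [B hB] := row_fullP hfull.
  have e : XL *m (T *m J *m T^T) *m XL^T = XL *m J *m XL^T.
    by rewrite -XhLJ -ALQp !trmx_mul !trmxK /J Jtr !mulmxA.
  have := congr1 (fun Z => B *m Z *m B^T) e => /=.
  rewrite !mulmxA hB mul1mx -!mulmxA -trmx_mul hB trmx1 !mulmx1.
  by rewrite !mulmxA.
have Tinv : T *m (J *m T^T *m J) = 1%:M by rewrite !mulmxA TJT JJ.
have Tu : T \in unitmx by case: (mulmx1_unit Tinv).
have TJT' : T^T *m J *m T = J.
  have h := mulmx1C Tinv; rewrite -!mulmxA in h.
  by rewrite -[T^T *m J *m T]mul1mx -(JJ R d) -/J -!mulmxA h mulmx1.
pose y := ycol T.
have hy1 : lorentz y y = 1 := lorentz_ycol TJT'.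
have hp : 0 < lorentz (row i0 XL) y.
  rewrite -lorentz_col -row_mul mxE ALQp XhLE mul_mx_diag mxE /QS sel_mxE sel0.
  by rewrite mulr_gt0 ?hpos.
have T00 : 0 < T 0 0.
  rewrite -(ycol00 T) -/y ltNge; apply/negP => hle.
  have hyl : y 0 0 < 0.
    move: hy1; rewrite lorentz_sq0 => hy1; have := sq0_ge0 y; nra.
  have yH' : in_hyperboloid (- y) by split; [rewrite lorentzNN | rewrite mxE oppr_gt0].
  have := hyp_ge1 (hXL i0) yH'; rewrite lorentzN; lra.
have yH : in_hyperboloid y by split; rewrite // /y ycol00.
exists (col_mx XhL XhN); split; first exact: hL.
rewrite XhE; split; [|split].
- move=> i; rewrite row_mul; split; first by rewrite lorentz_mul //; case: (hX i).
  by rewrite lorentz_col; apply: lt_le_trans ltr01 (hyp_ge1 (hX i) yH).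
- by move=> i j; rewrite !row_mul /dH lorentz_mul.
- by exists T.
Qed.
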